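(* Let $\mathcal{A}$ be a $^*$-algebra with quadratic module $\mathcal{A}^+_{\mathrm H}$, let $\mathcal{J}\in\mathcal{A}_{\mathrm H}$, let $\mathcal{D}$ be a pre-Hilbert space and $\pi:\mathcal{A}\to\mathcal{L}^*(\mathcal{D})$ an injective $^*$-representation with $\mathcal{A}^+_{\mathrm H}=\pi^{-1}(\mathcal{L}^*(\mathcal{D})^+_{\mathrm H})$. For $\mu\in\mathbb{R}$ let $\mathcal{E}_\mu=\{\psi\in\mathcal{D}:\pi(\mathcal{J})\psi=\mu\psi\}$ and $\mathcal{E}_\mu^\perp$ its orthogonal complement in $\mathcal{D}$. Let $\mu\in\mathbb{R}$ and assume $\mathcal{D}=\mathcal{E}_\mu\oplus\mathcal{E}_\mu^\perp$ as vector spaces and that there is $\epsilon>0$ with $\langle\phi,\pi((\mathcal{J}-\mu\mathbb{1})^2)\phi\rangle\ge\epsilon\langle\phi,\phi\rangle$ for all $\phi\in\mathcal{E}_\mu^\perp$. Then $$(\mathcal{A}^{\mathfrak u_1})^+_{\mathrm H}+\big(\langle\mathcal{J}-\mu\rangle\big)_{\mathrm H}=\mathcal{R}_\mu=\{a\in(\mathcal{A}^{\mathfrak u_1})_{\mathrm H}:\langle\psi,\pi(a)\psi\rangle\ge0\text{ for all }\psi\in\mathcal{E}_\mu\},$$ and the reduced algebra $\mathcal{A}_{\mu\text{-red}}$ admits an injective $^*$-representation $\pi_{\mu\text{-red}}:\mathcal{A}_{\mu\text{-red}}\to\mathcal{L}^*(\mathcal{E}_\mu)$, given by $\pi_{\mu\text{-red}}([a]_\mu)\psi=\pi(a)\psi\in\mathcal{E}_\mu$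 for $\psi\in\mathcal{E}_\mu$, $a\in\mathcal{A}^{\mathfrak u_1}$, such that $(\mathcal{A}_{\mu\text{-red}})^+_{\mathrm H}=\pi_{\mu\text{-red}}^{-1}(\mathcal{L}^*(\mathcal{E}_\mu)^+_{\mathrm H})$.
   Context: A $^*$-algebra is a unital associative complex algebra with antilinear involution satisfying $(ab)^*=b^*a^*$; $\mathcal{A}_{\mathrm H}$ denotes its Hermitian elements. A quadratic module is a subset $Q\subseteq\mathcal{A}_{\mathrm H}$ with $Q+Q\subseteq Q$, $a^*Qa\subseteq Q$ for all $a$, and $\mathbb{1}\in Q$; its support is $\operatorname{supp}Q=Q\cap(-Q)$ and $\operatorname{supp}_{\mathbb C}Q=\operatorname{supp}Q+\mathrm{i}\operatorname{supp}Q$. Here $\mathcal{A}^+_{\mathrm H}$ is a quadratic module with $\operatorname{supp}\mathcal{A}^+_{\mathrm H}=\{0\}$. For a pre-Hilbert space $\mathcal{D}$, $\mathcal{L}^*(\mathcal{D})$ is the $^*$-algebra of adjointable linear endomorphisms and $\mathcal{L}^*(\mathcal{D})^+_{\mathrm H}=\{a\text{ Hermitian}:\langle\psi,a\psi\rangle\ge0\ \forall\psi\}$. $\mathcal{A}^{\mathfrak u_1}=\{a\in\mathcal{A}:a\mathcal{J}=\mathcal{J}a\}$ with $(\mathcal{A}^{\mathfrak u_1})^+_{\mathrm H}=\mathcal{A}^+_{\mathrm H}\cap\mathcal{A}^{\mathfrak u_1}$; $\langle\mathcal{J}-\mu\rangle$ is the $^*$-ideal of $\mathcal{A}^{\mathfrak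 u_1}$ generated by $\mathcal{J}-\mu\mathbb{1}$; for a set $S$, $S_{\mathrm H}=S\cap\mathcal{A}_{\mathrm H}$. A state on $\mathcal{A}^{\mathfrak u_1}$ is a linear functional $\omega$ with $\omega(\mathbb{1})=1$, real on Hermitian elements, nonnegative on $(\mathcal{A}^{\mathfrak u_1})^+_{\mathrm H}$; it is a $\mu$-eigenstate of $\mathcal{J}$ if $\omega((\mathcal{J}-\mu\mathbb{1})^*(\mathcal{J}-\mu\mathbb{1}))=0$. $\mathcal{R}_\mu=\{a\in(\mathcal{A}^{\mathfrak u_1})_{\mathrm H}:\omega(a)\ge0\text{ for all }\mu\text{-eigenstates }\omega\}$, $\mathcal{V}_\mu=\{a\in\mathcal{A}^{\mathfrak u_1}:\omega(a)=0\text{ for all }\mu\text{-eigenstates }\omega\}$. The reduced ordered $^*$-algebra is $\mathcal{A}_{\mu\text{-red}}=\mathcal{A}^{\mathfrak u_1}/\mathcal{V}_\mu$, $[\cdot]_\mu$ the quotient map, with positive cone $(\mathcal{A}_{\mu\text{-red}})^+_{\mathrm H}=\{[r]_\mu:r\in\mathcal{R}_\mu\}$. *)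

(* Defs.v *)
From mathcomp Require Import all_boot all_algebra.
From mathcomp Require Export complex.
From mathcomp Require Export reals.
Set Implicit Arguments.
Unset Strict Implicit.
Unset Printing Implicit Defensive.
Import GRing.Theory Num.Theory.
Local Open Scope ring_scope.

Section StarAlgebras.
Variable R : realType.
Local Notation C := (R[i]).

Definition rC (r : R) : C := (r%:C)%C.

Section Alg.
Variable A : algType C.
Variable star : A -> A.

Definition is_star_involution : Prop :=
  [/\ forall a, star (star a) = a,
      forall (z : C) (a b : A), star (z *: a + b) = z^* *: star a + star b &
      forall a b : A, star (a * b) = star b * star a].

Definition herm (a : A) : Prop := star a = a.

Definition is_quadratic_module (Q : A -> Prop) : Prop :=
  [/\ forall q, Q q -> herm q,
      forall p q, Q p -> Q q -> Q (p + q),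
      forall a q, Q q -> Q (star a * q * a) & Q 1].

Definition qm_support (Q : A -> Prop) (a : A) : Prop := Q a /\ Q (- a).

Definition rsc (mu : R) : A := (rC mu)%:A.

Definition u1 (J : A) (a : A) : Prop := a * J = J * a.

Definition is_star_ideal_u1 (J : A) (I : A -> Prop) : Prop :=
  [/\ forall a, I a -> u1 J a,
      I 0,
      forall (z : C) a b, I a -> I b -> I (z *: a + b),
      forall a b, u1 J a -> I b -> I (a * b) /\ I (b * a) &
      forall a, I a -> I (star a)].

Definition gen_star_ideal_u1 (J x : A) (a : A) : Prop :=
  forall I, is_star_ideal_u1 J I -> I x -> I a.

(* states on A^{u_1} (only their values on A^{u_1} matter) *)
Definition is_state_u1 (Apos : A -> Prop) (J : A) (omega : A -> C) : Prop :=
  [/\ forall (z : C) a b, u1 J a -> u1 J b -> omega (z *: a + b) = z * omega a + omega b,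
      omega 1 = 1,
      forall a, u1 J a -> herm a -> omega a \is Num.real &
      forall a, u1 J a -> Apos a -> 0 <= omega a].

Definition is_eigenstate (Apos : A -> Prop) (J : A) (mu : R) (omega : A -> C) : Prop :=
  is_state_u1 Apos J omega /\ omega (star (J - rsc mu) * (J - rsc mu)) = 0.

Definition Rmu (Apos : A -> Prop) (J : A) (mu : R) (a : A) : Prop :=
  [/\ u1 J a, herm a &
      forall omega, is_eigenstate Apos J mu omega -> 0 <= omega a].

Definition Vmu (Apos : A -> Prop) (J : A) (mu : R) (a : A) : Prop :=
  u1 J a /\ forall omega, is_eigenstate Apos J mu omega -> omega a = 0.

(* The reduced algebra A_{mu-red} = A^{u_1} / V_mu is handled through
   representatives a in A^{u_1}:  [a]_mu = [b]_mu  iff  a - b ∈ V_mu,  and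
   [a]_mu ∈ (A_{mu-red})^+_H  iff  exists r ∈ R_mu with [r]_mu = [a]_mu. *)
Definition red_eq (Apos : A -> Prop) (J : A) (mu : R) (a b : A) : Prop :=
  Vmu Apos J mu (a - b).

Definition red_pos (Apos : A -> Prop) (J : A) (mu : R) (a : A) : Prop :=
  exists r, Rmu Apos J mu r /\ red_eq Apos J mu r a.

End Alg.

Section PreHilbert.
Variable D : lmodType C.
Variable ip : D -> D -> C.   (* <psi, phi>, antilinear in psi, linear in phi *)

Definition is_inner_product : Prop :=
  [/\ forall psi (z : C) phi chi, ip psi (z *: phi + chi) = z * ip psi phi + ip psi chi,
      forall psi phi, ip phi psi = (ip psi phi)^*,
      forall psi, 0 <= ip psi psi &
      forall psi, ip psi psi = 0 -> psi = 0].

(* T is a positive Hermitian operator on the subspace S (for S the whole space: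
   T ∈ L^*(D)^+_H , given that T is adjointable) *)
Definition op_pos_on (S : D -> Prop) (T : D -> D) : Prop :=
  (forall psi phi, S psi -> S phi -> ip psi (T phi) = ip (T psi) phi) /\
  (forall psi, S psi -> 0 <= ip psi (T psi)).

Definition orth_compl (S : D -> Prop) (phi : D) : Prop :=
  forall psi, S psi -> ip psi phi = 0.

Variable A : algType C.
Variable star : A -> A.

(* pi : A -> L^*(D) is a (unital) *-representation: each pi a is linear,
   pi is linear and multiplicative, pi 1 = id, and pi (star a) is the adjoint
   of pi a (so each pi a is adjointable). *)
Definition is_star_rep (pi : A -> D -> D) : Prop :=
  [/\ forall a (z : C) psi phi, pi a (z *: psi + phi) = z *: pi a psi + pi a phi,
      forall (z : C) a b psi, pi (z *: a + b) psi = z *: pi a psi + pi b psi,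
      forall a b psi, pi (a * b) psi = pi a (pi b psi),
      forall psi, pi 1 psi = psi &
      forall a psi phi, ip psi (pi a phi) = ip (pi (star a) psi) phi].

Definition rep_injective (pi : A -> D -> D) : Prop :=
  forall a b, (forall psi, pi a psi = pi b psi) -> a = b.

Definition eigsp (pi : A -> D -> D) (J : A) (mu : R) (psi : D) : Prop :=
  pi J psi = rC mu *: psi.

End PreHilbert.

End StarAlgebras.

(* Main.v *)
Require Import Defs.
From mathcomp Require Import all_boot all_algebra.
From mathcomp Require Import complex reals.
From mathcomp Require Import all_order ring lra.
Import Order.TTheory GRing.Theory Num.Theory.
Local Open Scope ring_scope.
Set Implicit Arguments. Unset Strict Implicit. Unset Printing Implicit Defensive.

Section Main.
Variables (R : realType) (A : algType R[i]) (star : A -> A) (Apos : A -> Prop)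
  (J : A) (D : lmodType R[i]) (ip : D -> D -> R[i]) (pi : A -> D -> D) (mu : R).
Hypothesis Hstar : is_star_involution star.
Hypothesis Hqm : is_quadratic_module star Apos.
Hypothesis HJ : herm star J.
Hypothesis Hip : is_inner_product ip.
Hypothesis Hpi : is_star_rep ip star pi.
Hypothesis Hpos : forall a, Apos a <-> op_pos_on ip (fun _ => True) (pi a).
Hypothesis Hdec : forall psi, exists psi0 phi,
      [/\ eigsp pi J mu psi0, orth_compl ip (eigsp pi J mu) phi & psi = psi0 + phi].

Local Notation K := (J - rsc A mu).
Local Notation E := (eigsp pi J mu).
Local Notation Ep := (orth_compl ip (eigsp pi J mu)).
Local Notation u := (u1 J).

Lemma starK a : star (star a) = a. Proof. by case: Hstar. Qed.
Lemma starM a b : star (a * b) = star b * star a. Proof. by case: Hstar. Qed.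
Lemma starZD z a b : star (z *: a + b) = z^* *: star a + star b. Proof. by case: Hstar. Qed.
Lemma starD a b : star (a + b) = star a + star b.
Proof. by rewrite -[a]scale1r starZD rmorph1 !scale1r. Qed.
Lemma star0 : star 0 = 0.
Proof. by apply/(addrI (star 0)); rewrite -starD !addr0. Qed.
Lemma starZ z a : star (z *: a) = z^* *: star a.
Proof. by rewrite -[z *: a]addr0 starZD star0 addr0. Qed.
Lemma starN a : star (- a) = - star a.
Proof. by rewrite -scaleN1r starZ rmorphN1 scaleN1r. Qed.
Lemma starB a b : star (a - b) = star a - star b.
Proof. by rewrite starD starN. Qed.
Lemma star1 : star 1 = 1.
Proof. have h := starM (star 1) 1; rewrite mulr1 starK in h. by rewrite mulr1 in h; rewrite -h. Qed.
Lemma star_alg z : star (z%:A) = z^*%:A.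
Proof. by rewrite starZ star1. Qed.
Lemma conj_rC (r : R) : (rC r)^* = rC r.
Proof. exact: conjc_real. Qed.
Lemma starK_ : star K = K.
Proof. by rewrite starB HJ /rsc star_alg conj_rC. Qed.


Lemma ipZD psi z phi chi : ip psi (z *: phi + chi) = z * ip psi phi + ip psi chi.
Proof. by case: Hip. Qed.
Lemma ipC psi phi : ip phi psi = (ip psi phi)^*. Proof. by case: Hip. Qed.
Lemma ip_ge0 psi : 0 <= ip psi psi. Proof. by case: Hip. Qed.
Lemma ip_eq0 psi : ip psi psi = 0 -> psi = 0. Proof. by case: Hip => _ _ _ h /h. Qed.
Lemma ipD psi phi chi : ip psi (phi + chi) = ip psi phi + ip psi chi.
Proof. by rewrite -[phi]scale1r ipZD mul1r scale1r. Qed.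
Lemma ipr0 psi : ip psi 0 = 0.
Proof. by apply/(addrI (ip psi 0)); rewrite -ipD !addr0. Qed.
Lemma ipZ psi z phi : ip psi (z *: phi) = z * ip psi phi.
Proof. by rewrite -[z *: phi]addr0 ipZD ipr0 addr0. Qed.
Lemma ipN psi phi : ip psi (- phi) = - ip psi phi.
Proof. by rewrite -scaleN1r ipZ mulN1r. Qed.
Lemma ipB psi phi chi : ip psi (phi - chi) = ip psi phi - ip psi chi.
Proof. by rewrite ipD ipN. Qed.
Lemma ipDl psi phi chi : ip (phi + chi) psi = ip phi psi + ip chi psi.
Proof. by rewrite ipC ipD rmorphD /= -!ipC. Qed.
Lemma ipZl psi z phi : ip (z *: phi) psi = z^* * ip phi psi.
Proof. by rewrite ipC ipZ rmorphM /= -ipC. Qed.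
Lemma ipNl psi phi : ip (- phi) psi = - ip phi psi.
Proof. by rewrite ipC ipN rmorphN /= -ipC. Qed.
Lemma ipl0 psi : ip 0 psi = 0.
Proof. by rewrite ipC ipr0 rmorph0. Qed.
Lemma ip_real psi : ip psi psi \is Num.real.
Proof. exact/ger0_real/ip_ge0. Qed.
Lemma ip_ext v : (forall chi, ip chi v = 0) -> v = 0.
Proof. by move=> h; apply: ip_eq0; apply: h. Qed.

Lemma piaZD a z psi phi : pi a (z *: psi + phi) = z *: pi a psi + pi a phi.
Proof. by case: Hpi. Qed.
Lemma piZD z a b psi : pi (z *: a + b) psi = z *: pi a psi + pi b psi.
Proof. by case: Hpi. Qed.
Lemma piM a b psi : pi (a * b) psi = pi a (pi b psi). Proof. by case: Hpi. Qed.
Lemma pi1 psi : pi 1 psi = psi. Proof. by case: Hpi. Qed.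
Lemma pi_adj a psi phi : ip psi (pi a phi) = ip (pi (star a) psi) phi.
Proof. by case: Hpi. Qed.
Lemma piaD a psi phi : pi a (psi + phi) = pi a psi + pi a phi.
Proof. by rewrite -[psi]scale1r piaZD !scale1r. Qed.
Lemma pia0 a : pi a 0 = 0.
Proof. by apply/(addrI (pi a 0)); rewrite -piaD !addr0. Qed.
Lemma piaZ a z psi : pi a (z *: psi) = z *: pi a psi.
Proof. by rewrite -[z *: psi]addr0 piaZD pia0 addr0. Qed.
Lemma piaN a psi : pi a (- psi) = - pi a psi.
Proof. by rewrite -scaleN1r piaZ scaleN1r. Qed.
Lemma piaB a psi phi : pi a (psi - phi) = pi a psi - pi a phi.
Proof. by rewrite piaD piaN. Qed.
Lemma piD a b psi : pi (a + b) psi = pi a psi + pi b psi.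
Proof. by rewrite -[a]scale1r piZD !scale1r. Qed.
Lemma pi0 psi : pi 0 psi = 0.
Proof. by apply/(addrI (pi 0 psi)); rewrite -piD !addr0. Qed.
Lemma piZ z a psi : pi (z *: a) psi = z *: pi a psi.
Proof. by rewrite -[z *: a]addr0 piZD pi0 addr0. Qed.
Lemma piN a psi : pi (- a) psi = - pi a psi.
Proof. by rewrite -(scaleN1r a) piZ scaleN1r. Qed.
Lemma piB a b psi : pi (a - b) psi = pi a psi - pi b psi.
Proof. by rewrite piD piN. Qed.
Lemma pi_alg z psi : pi (z%:A) psi = z *: psi.
Proof. by have := piZ z 1 psi; rewrite pi1 => <-. Qed.
Lemma piK_E psi : E psi -> pi K psi = 0.
Proof. by rewrite /eigsp => h; rewrite piB h /rsc pi_alg subrr. Qed.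

Lemma u1_0 : u 0. Proof. by rewrite /u1 mul0r mulr0. Qed.
Lemma u1_1 : u 1. Proof. by rewrite /u1 mul1r mulr1. Qed.
Lemma u1_J : u J. Proof. by []. Qed.
Lemma u1_alg z : u (z%:A). Proof. by rewrite /u1 -scalerAl -scalerAr mul1r mulr1. Qed.
Lemma u1ZD z a b : u a -> u b -> u (z *: a + b).
Proof. by rewrite /u1 => ha hb; rewrite mulrDl mulrDr -scalerAl -scalerAr ha hb. Qed.
Lemma u1D a b : u a -> u b -> u (a + b).
Proof. by move=> ha hb; rewrite -[a]scale1r; apply: u1ZD. Qed.
Lemma u1Z z a : u a -> u (z *: a).
Proof. by move=> ha; rewrite -[z *: a]addr0; apply: u1ZD => //; apply: u1_0. Qed.
Lemma u1N a : u a -> u (- a).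
Proof. by move=> ha; rewrite -scaleN1r; apply: u1Z. Qed.
Lemma u1B a b : u a -> u b -> u (a - b).
Proof. by move=> ha hb; apply: u1D => //; apply: u1N. Qed.
Lemma u1M a b : u a -> u b -> u (a * b).
Proof. by rewrite /u1 => ha hb; rewrite -mulrA hb !mulrA ha. Qed.
Lemma u1_star a : u a -> u (star a).
Proof. by rewrite /u1 => ha; rewrite -{1}HJ -starM -ha starM HJ. Qed.
Lemma u1_K : u K.
Proof. by apply: u1B; [apply: u1_J | apply: u1_alg]. Qed.
Lemma u1_Kcomm a : u a -> a * K = K * a.
Proof. by rewrite /u1 => ha; rewrite mulrBr mulrBl ha /rsc -scalerAl -scalerAr mul1r mulr1. Qed.

Lemma E0 : E 0. Proof. by rewrite /eigsp pia0 scaler0. Qed.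
Lemma EZD z psi phi : E psi -> E phi -> E (z *: psi + phi).
Proof. by rewrite /eigsp => h1 h2; rewrite piaZD h1 h2 scalerDr !scalerA mulrC. Qed.
Lemma ED psi phi : E psi -> E phi -> E (psi + phi).
Proof. by move=> h1 h2; rewrite -[psi]scale1r; apply: EZD. Qed.
Lemma EZ z psi : E psi -> E (z *: psi).
Proof. by move=> h; rewrite -[z *: psi]addr0; apply: EZD => //; apply: E0. Qed.
Lemma E_pi a psi : u a -> E psi -> E (pi a psi).
Proof. by rewrite /eigsp /u1 => ha h; rewrite -piM -ha piM h piaZ. Qed.
Lemma Ep_pi a phi : u a -> Ep phi -> Ep (pi a phi).
Proof.
move=> ha h psi hpsi; rewrite pi_adj; apply: h; apply: E_pi => //.
exact: u1_star.
Qed.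
Lemma EEp psi phi : E psi -> Ep phi -> ip psi phi = 0.
Proof. by move=> h1 h2; apply: h2. Qed.
Lemma EpE psi phi : E psi -> Ep phi -> ip phi psi = 0.
Proof. by move=> h1 h2; rewrite ipC h2 // rmorph0. Qed.


Ltac u1tac := repeat first [done | apply: u1_K | apply: u1_1 | apply: u1_alg | apply: u1_star
  | apply: u1M | apply: u1ZD | apply: u1D | apply: u1B | apply: u1Z | apply: u1N].

Section State.
Variable om : A -> R[i].
Hypothesis Hom : is_state_u1 star Apos J om.

Lemma omZD z a b : u a -> u b -> om (z *: a + b) = z * om a + om b.
Proof. by case: Hom => h _ _ _; apply: h. Qed.
Lemma om1 : om 1 = 1. Proof. by case: Hom. Qed.
Lemma om_real a : u a -> herm star a -> om a \is Num.real.
Proof. by case: Hom => _ _ h _; apply: h. Qed.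
Lemma om_ge0 a : u a -> Apos a -> 0 <= om a.
Proof. by case: Hom => _ _ _ h; apply: h. Qed.
Lemma omD a b : u a -> u b -> om (a + b) = om a + om b.
Proof. by move=> ha hb; rewrite -[a]scale1r omZD // mul1r scale1r. Qed.
Lemma om0 : om 0 = 0.
Proof. by apply/(addrI (om 0)); rewrite -omD ?addr0 //; apply: u1_0. Qed.
Lemma omZ z a : u a -> om (z *: a) = z * om a.
Proof. by move=> ha; rewrite -[z *: a]addr0 omZD ?om0 ?addr0 //; apply: u1_0. Qed.
Lemma omN a : u a -> om (- a) = - om a.
Proof. by move=> ha; rewrite -(scaleN1r a) omZ // mulN1r. Qed.
Lemma omB a b : u a -> u b -> om (a - b) = om a - om b.
Proof. by move=> ha hb; rewrite omD ?omN //; apply: u1N. Qed.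

Lemma om_star x : u x -> om (star x) = (om x)^*.
Proof.
move=> hx; have hsx : u (star x) by apply: u1_star.
have h1 : om (x + star x) \is Num.real.
  apply: om_real; first by apply: u1D.
  by rewrite /herm starD starK addrC.
have h2 : om ('i *: (x - star x)) \is Num.real.
  apply: om_real; first by apply: u1Z; apply: u1B.
  by rewrite /herm starZ starB starK conjCi scaleNr -scalerN opprB.
rewrite omD // in h1; rewrite omZ ?omB // in h2; last by apply: u1B.
move: h1 h2; set p := om x; set q := om (star x) => h1 h2.
have e1 := conj_Creal h1; have e2 := conj_Creal h2.
rewrite rmorphD /= in e1; rewrite rmorphM rmorphB /= conjCi in e2.
have e2' : p^* - q^* = q - p.
  have := congr1 ( *%R 'i) e2; rewrite !mulrA mulrN mulCii opprK mul1r mulN1r opprB.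
  by [].
have e3 : (p^* + q^*) + (p^* - q^*) = (p + q) + (q - p) by rewrite e1 e2'.
have : 2 * (q - p^*) = 0.
  have -> : 2 * (q - p^*) = ((p + q) + (q - p)) - ((p^* + q^*) + (p^* - q^*)) by ring.
  by rewrite e3 subrr.
move/eqP; rewrite mulf_eq0 pnatr_eq0 /= subr_eq0 => /eqP.
by [].
Qed.

Lemma Apos_sq x : Apos (star x * x).
Proof.
case: Hqm => _ _ h h1; have := h x 1 h1; by rewrite mulr1.
Qed.

Hypothesis Heig : om (star K * K) = 0.

Lemma om_wK w : u w -> om (w * K) = 0.
Proof.
move=> hw; have hsw : u (star w) by apply: u1_star.
have hK := u1_K.
set c := om (w * K); set m := om (w * star w).
have hm : 0 <= m.
  apply: om_ge0; first by apply: u1M.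
  by have := Apos_sq (star w); rewrite starK.
have hmr : m \is Num.real by apply: ger0_real.
have hm1 : 0 < m + 1 := ltr_wpDl hm ltr01.
set t := (m + 1)^-1.
have ht0 : 0 <= t by rewrite invr_ge0 ltW.
have htc : t^* = t by apply: conj_Creal; apply: ger0_real.
set s := - (c * t).
set x := s *: star w + K.
have hx : u x by apply: u1ZD.
have hsx : star x = s^* *: w + K by rewrite /x starZD starK starK_.
have hexp : star x * x = (s^* * s) *: (w * star w) + (s^* *: (w * K) + (s *: (K * star w) + K * K)).
  rewrite hsx /x mulrDl (mulrDr (s^* *: w)) (mulrDr K (s *: star w)).
  by rewrite -!scalerAl -!scalerAr scalerA !addrA.
have hpos : 0 <= om (star x * x).
  apply: om_ge0; last exact: Apos_sq.
  by apply: u1M => //; apply: u1_star.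
have hKw : om (K * star w) = c^*.
  by rewrite -starK_ -starM om_star //; apply: u1M.
have hKK : om (K * K) = 0 by rewrite -{1}starK_.
rewrite hexp omD ?omZ ?omD ?omZ ?hKw ?hKK in hpos; try by u1tac.
move: hpos; rewrite addr0 rmorphN rmorphM /= htc.
rewrite -/c -/m /s.
have hm1' : m + 1 != 0 by rewrite gt_eqF.
have -> : - (c^* * t) * - (c * t) * m + (- (c^* * t) * c + - (c * t) * c^*)
   = - ((c * c^*) * (m + 2) * t ^+ 2).
  by rewrite /t; field.
have hn : 0 <= (c * c^*) * (m + 2) * t ^+ 2.
  rewrite -normCK; apply: mulr_ge0; last exact: exprn_ge0.
  apply: mulr_ge0; first exact: exprn_ge0.
  by apply: addr_ge0 => //; apply: ler0n.
rewrite oppr_ge0 => hn'.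
have /eqP := le_anti (introT andP (conj hn' hn)).
have hm2 : m + 2 != 0.
  by rewrite gt_eqF //; apply: ltr_wpDl hm _; apply: ltr0n.
rewrite !mulf_eq0 /t invr_eq0 (negbTE hm1') (negbTE hm2) conjC_eq0 !orbF orbb => /eqP.
by move=> ->.
Qed.


Lemma om_ideal q : gen_star_ideal_u1 star J K q -> om q = 0.
Proof.
move=> hq.
pose I x := u x /\ forall y z, u y -> u z -> om (y * x * z) = 0.
have hI : is_star_ideal_u1 star J I.
  split.
  - by move=> a [].
  - split; first exact: u1_0.
    by move=> y z _ _; rewrite mulr0 mul0r om0.
  - move=> z a b [ha Ha] [hb Hb]; split; first exact: u1ZD.
    move=> y w hy hw; rewrite mulrDr mulrDl -scalerAr -scalerAl omZD ?Ha ?Hb ?mulr0 ?addr0 //; u1tac.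
  - move=> a b ha [hb Hb]; split; split; try u1tac.
    + by move=> y z hy hz; rewrite mulrA Hb //; u1tac.
    + by move=> y z hy hz; rewrite -!mulrA mulrA Hb //; u1tac.
  - move=> a [ha Ha]; split; first u1tac.
    move=> y z hy hz.
    have -> : y * star a * z = star (star z * a * star y) by rewrite !starM !starK mulrA.
    rewrite om_star ?Ha ?rmorph0 //; u1tac.
have hIK : I K.
  split; first exact: u1_K.
  by move=> y z hy hz; rewrite -mulrA -u1_Kcomm // mulrA om_wK //; u1tac.
have [_ H] := hq I hI hIK.
by have := H 1 1 u1_1 u1_1; rewrite mul1r mulr1.
Qed.

End State.


Lemma eig_ideal om q : is_eigenstate star Apos J mu om ->
  gen_star_ideal_u1 star J K q -> om q = 0.
Proof. by case=> h1 h2; apply: om_ideal. Qed.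

Lemma gen_u1 q : gen_star_ideal_u1 star J K q -> u q.
Proof.
move=> hq; apply: hq; last exact: u1_K.
split => //; [exact: u1_0 | by move=> *; apply: u1ZD | | by move=> *; apply: u1_star].
by move=> a b ha hb; split; apply: u1M.
Qed.

Lemma Apos_herm p : Apos p -> herm star p.
Proof. by case: Hqm => h _ _ _; apply: h. Qed.

Lemma L1 a : (exists p q, [/\ u p /\ Apos p,
                       gen_star_ideal_u1 star J K q /\ herm star q
                     & a = p + q]) -> Rmu star Apos J mu a.
Proof.
case=> p [q [[hp Pp] [hq Hq] ->]]; have uq : u q by apply: gen_u1.
split; first exact: u1D.
  by rewrite /herm starD Hq Apos_herm.
move=> om hom; have [hs _] := hom.
rewrite omD // (@eig_ideal om q hom hq) addr0; exact: om_ge0.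
Qed.

Lemma vstate psi : E psi -> ip psi psi != 0 ->
  is_eigenstate star Apos J mu (fun x => ip psi (pi x psi) / ip psi psi).
Proof.
move=> hE hn; split; first split.
- by move=> z a b _ _; rewrite piZD ipZD mulrDl mulrA.
- by rewrite pi1 divff.
- move=> a _ ha; apply: realM; last by rewrite realV; apply: ip_real.
  rewrite CrealE; apply/eqP; rewrite -ipC pi_adj ha //.
- move=> a _ /Hpos [_ h]; apply: divr_ge0; [exact: h | exact: ip_ge0].
- by rewrite piM piK_E // pia0 ipr0 mul0r.
Qed.

Lemma L2 a : Rmu star Apos J mu a ->
  [/\ u a, herm star a & forall psi, E psi -> 0 <= ip psi (pi a psi)].
Proof.
case=> ha Ha hom; split => // psi hE.
have [/eqP h0|hn] := boolP (ip psi psi == 0).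
  by have -> := ip_eq0 h0; rewrite pia0 ipr0.
have := hom _ (vstate hE hn) => /=.
by rewrite pmulr_lge0 // ?invr_gt0 lt0r hn ip_ge0.
Qed.


Lemma qf_split x c0 c1 : u x -> E c0 -> Ep c1 ->
  ip (c0 + c1) (pi x (c0 + c1)) = ip c0 (pi x c0) + ip c1 (pi x c1).
Proof.
move=> hx h0 h1; rewrite piaD ipDl !ipD.
rewrite (EEp h0 (Ep_pi hx h1)) (EpE (E_pi hx h0) h1).
by rewrite addr0 add0r.
Qed.

Variable eps : R.
Hypothesis eps_gt0 : 0 < eps.
Hypothesis Heps : forall phi, Ep phi ->
       rC eps * ip phi phi <= ip phi (pi ((J - rsc A mu) ^+ 2) phi).

Lemma L3 a : u a -> herm star a -> (forall psi, E psi -> 0 <= ip psi (pi a psi)) ->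
  exists p q, [/\ u p /\ Apos p,
                  gen_star_ideal_u1 star J K q /\ herm star q
                & a = p + q].
Proof.
move=> ha Ha Hpa.
set c : R[i] := 4^-1.
have hc : c^* = c by apply: conj_Creal; rewrite realV realn.
set b := a - c%:A.
have hb : u b by rewrite /b; u1tac.
have Hb : star b = b by rewrite /b starB Ha star_alg hc.
have he : 0 < rC eps by rewrite /rC ltcR.
have he0 : rC eps != 0 by rewrite gt_eqF.
set z : R[i] := - (rC eps)^-1.
have hz : z^* = z by rewrite /z rmorphN fmorphV /= conj_rC.
set q := z *: (b * K ^+ 2 * b).
have hq : u q by rewrite /q expr2; u1tac.
exists (a - q), q; split.
- split; first by u1tac.
  have Hq : star q = q.
    by rewrite /q starZ hz [star (_ * b)]starM [star (b * _)]starM Hb expr2 [star (K * K)]starM starK_ !mulrA.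
  have Hp : star (a - q) = a - q by rewrite starB Ha Hq.
  apply/Hpos; split.
    by move=> psi phi _ _; rewrite pi_adj Hp.
  move=> chi _; have [c0 [c1 [h0 h1 ->]]] := Hdec chi.
  rewrite qf_split //; last by u1tac.
  apply: addr_ge0.
    rewrite piB ipB /q piZ !piM (piK_E (E_pi hb h0)) !pia0 scaler0 ipr0 subr0.
    exact: Hpa.
  set v := pi a c1.
  have hvw : ip v c1 = ip c1 v by rewrite /v -{1}Ha -pi_adj.
  set phi' := pi b c1.
  have hphi' : Ep phi' by apply: Ep_pi.
  have Hphi := Heps hphi'.
  rewrite -subr_ge0 in Hphi.
  rewrite piB ipB /q piZ ipZ (piM (b * K ^+ 2) b) (piM b (K ^+ 2)) [ip c1 (pi b _)]pi_adj Hb -/phi'.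
  move: Hphi; set X := ip phi' (pi (K ^+ 2) phi') => Hphi.
  have ephi : phi' = v - c *: c1 by rewrite /phi' /b piB pi_alg.
  have -> : ip c1 v - z * X = (rC eps)^-1 * (X - rC eps * ip phi' phi') + ip (v + c *: c1) (v + c *: c1).
    rewrite ephi !ipDl !ipD !ipNl !ipN !ipZl !ipZ hc hvw /z /c.
    field.
    by rewrite he0.
  apply: addr_ge0; last exact: ip_ge0.
  by apply: mulr_ge0 => //; rewrite invr_ge0 ltW.
- split; last first.
    by rewrite /herm /q starZ hz [star (_ * b)]starM [star (b * _)]starM Hb expr2 [star (K * K)]starM starK_ !mulrA.
  move=> I [_ I0 I3 I4 _] IK.
  have -> : q = z *: (b * (K * (K * b))) + 0 by rewrite addr0 /q expr2 !mulrA.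
  apply: I3 => //.
  have [_ h1] := I4 _ _ hb IK.
  have [h2 _] := I4 _ _ u1_K h1.
  exact: (proj1 (I4 _ _ hb h2)).
- by rewrite subrK.
Qed.


Lemma RHS_Rmu a : u a -> herm star a -> (forall psi, E psi -> 0 <= ip psi (pi a psi)) ->
  Rmu star Apos J mu a.
Proof. by move=> ha Ha H; apply: L1; apply: L3. Qed.

Lemma part1 a :
     ((exists p q, [/\ u p /\ Apos p,
                       gen_star_ideal_u1 star J K q /\ herm star q
                     & a = p + q])
        <-> Rmu star Apos J mu a) /\
     (Rmu star Apos J mu a <->
        [/\ u a, herm star a &
            forall psi, E psi -> 0 <= ip psi (pi a psi)]).
Proof.
split; split.
- exact: L1.
- by move=> /L2 [ha Ha H]; apply: L3.
- exact: L2.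
- by case=> ha Ha H; apply: RHS_Rmu.
Qed.

Lemma kill x : u x -> herm star x -> (forall psi, E psi -> pi x psi = 0) ->
  forall om, is_eigenstate star Apos J mu om -> om x = 0.
Proof.
move=> hx Hx H om hom.
have R1 : Rmu star Apos J mu x.
  by apply: RHS_Rmu => // psi hp; rewrite H // ipr0.
have R2 : Rmu star Apos J mu (- x).
  apply: RHS_Rmu; first by u1tac.
    by rewrite /herm starN Hx.
  by move=> psi hp; rewrite piN H // oppr0 ipr0.
have [hs _] := hom.
case: R1 => _ _ /(_ om hom) h1; case: R2 => _ _ /(_ om hom).
rewrite omN // oppr_ge0 => h2.
by apply: le_anti; rewrite h1 h2.
Qed.

Lemma star_zero_E c : u c -> (forall psi, E psi -> pi c psi = 0) ->
  forall psi, E psi -> pi (star c) psi = 0.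
Proof.
move=> hc H psi hp; apply: ip_ext => chi.
have [c0 [c1 [h0 h1 ->]]] := Hdec chi.
rewrite pi_adj starK piaD H // add0r.
by apply: EpE => //; apply: Ep_pi.
Qed.

Lemma red_eq_iff a b : u a -> u b ->
  (red_eq star Apos J mu a b <-> forall psi, E psi -> pi a psi = pi b psi).
Proof.
move=> ha hb; have hc : u (a - b) by u1tac.
split.
- case=> _ H.
  have hq : forall chi, E chi -> ip chi (pi (a - b) chi) = 0.
    move=> chi hE; have [/eqP h0|hn] := boolP (ip chi chi == 0).
      by have -> := ip_eq0 h0; rewrite pia0 ipr0.
    have := H _ (vstate hE hn) => /= /eqP.
    by rewrite mulf_eq0 invr_eq0 (negbTE hn) orbF => /eqP.
  have pol : forall x y, E x -> E y -> ip x (pi (a - b) y) = 0.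
    move=> x y hx hy.
    have e1 := hq _ (ED hx hy).
    have e2 := hq _ (ED hx (EZ 'i hy)).
    rewrite piaD ipDl !ipD (hq _ hx) (hq _ hy) add0r addr0 in e1.
    rewrite piaD piaZ ipDl !ipD !ipZl !ipZ (hq _ hx) (hq _ hy) add0r !mulr0 addr0 conjCi in e2.
    move: e1 e2; set P := ip x _; set Q := ip y _ => e1 e2.
    have : 2 * 'i * P = 0.
      have -> : 2 * 'i * P = 'i * (P + Q) + ('i * P + - 'i * Q) by ring.
      by rewrite e1 e2 mulr0 addr0.
    move/eqP; rewrite !mulf_eq0 pnatr_eq0 /= => /orP [/eqP hi|/eqP //].
    by have := mulCii R[i]; rewrite hi mul0r => /eqP; rewrite eq_sym oppr_eq0 oner_eq0.
  move=> psi hp.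
  have hv := pol _ _ (E_pi hc hp) hp.
  have /eqP := ip_eq0 hv; rewrite piB subr_eq0 => /eqP.
  by [].
- move=> H; split => // om hom.
  set c := a - b.
  have Hc : forall psi, E psi -> pi c psi = 0 by move=> psi hp; rewrite piB H // subrr.
  have Hsc := star_zero_E hc Hc.
  have hsc : u (star c) by u1tac.
  have Hh : om (c + star c) = 0.
    apply: (kill _ _ _ hom); first by u1tac.
      by rewrite /herm starD starK addrC.
    by move=> psi hp; rewrite piD Hc // Hsc // addr0.
  have Hk : om ('i *: (c - star c)) = 0.
    apply: (kill _ _ _ hom); first by u1tac.
      by rewrite /herm starZ starB starK conjCi scaleNr -scalerN opprB.
    by move=> psi hp; rewrite piZ piB Hc // Hsc // subrr scaler0.
  have [hs _] := hom.
  have e : (- 'i) *: ('i *: (c - star c)) + (c + star c) = 2 *: c.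
    rewrite scalerA mulNr mulCii opprK scale1r addrACA addNr addr0.
    by rewrite scaler_nat mulr2n.
  have := omZD hs (- 'i) (u1Z 'i (u1B hc hsc)) (u1D hc hsc).
  rewrite e Hh Hk mulr0 addr0 omZ // => /eqP.
  by rewrite mulf_eq0 pnatr_eq0 /= => /eqP.
Qed.


Lemma red_pos_iff a : u a ->
  (red_pos star Apos J mu a <-> op_pos_on ip E (pi a)).
Proof.
move=> ha; split.
- case=> r [Rr Vr]; have [hr Hr Pr] := L2 Rr.
  have Her := (red_eq_iff hr ha).1 Vr.
  split.
    by move=> psi phi hp hf; rewrite -!Her // pi_adj Hr.
  by move=> psi hp; rewrite -Her //; apply: Pr.
- case=> Hsym Hp.
  have Hs : forall psi, E psi -> pi (star a) psi = pi a psi.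
    move=> psi hp; apply/eqP; rewrite -subr_eq0; apply/eqP; apply: ip_ext => chi.
    have [c0 [c1 [h0 h1 ->]]] := Hdec chi.
    rewrite ipB pi_adj starK piaD !ipDl (EpE hp (Ep_pi ha h1)) (EpE (E_pi ha hp) h1).
    by rewrite Hsym // !addr0 subrr.
  have hsa : u (star a) by u1tac.
  set r := 2^-1 *: (a + star a).
  have hr : u r by rewrite /r; u1tac.
  have h2 : (2^-1 : R[i])^* = 2^-1 by apply: conj_Creal; rewrite realV realn.
  have Er : forall psi, E psi -> pi r psi = pi a psi.
    move=> psi hp; rewrite /r piZ piD Hs //.
    have -> : pi a psi + pi a psi = (1 + 1 : R[i]) *: pi a psi by rewrite scalerDl scale1r.
    rewrite scalerA.
    have -> : (2^-1 * (1 + 1) : R[i]) = 1 by rewrite mulVf // pnatr_eq0.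
    by rewrite scale1r.
  exists r; split; last by apply/(red_eq_iff hr ha).
  apply: RHS_Rmu => //.
    by rewrite /herm /r starZ h2 starD starK addrC.
  by move=> psi hp; rewrite Er //; apply: Hp.
Qed.

Lemma main :
  (forall a,
     ((exists p q, [/\ u1 J p /\ Apos p,
                       gen_star_ideal_u1 star J (J - rsc A mu) q /\ herm star q
                     & a = p + q])
        <-> Rmu star Apos J mu a) /\
     (Rmu star Apos J mu a <->
        [/\ u1 J a, herm star a &
            forall psi, eigsp pi J mu psi -> 0 <= ip psi (pi a psi)])) /\
  [/\ forall a psi, u1 J a -> eigsp pi J mu psi -> eigsp pi J mu (pi a psi),
      forall a b, u1 J a -> u1 J b ->
        (red_eq star Apos J mu a b <->
           forall psi, eigsp pi J mu psi -> pi a psi = pi b psi),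
      [/\ forall (z : R[i]) a b psi, u1 J a -> u1 J b -> eigsp pi J mu psi ->
            pi (z *: a + b) psi = z *: pi a psi + pi b psi,
          forall a b psi, u1 J a -> u1 J b -> eigsp pi J mu psi ->
            pi (a * b) psi = pi a (pi b psi),
          forall psi, eigsp pi J mu psi -> pi 1 psi = psi &
          forall a psi phi, u1 J a -> eigsp pi J mu psi -> eigsp pi J mu phi ->
            ip psi (pi a phi) = ip (pi (star a) psi) phi] &
      forall a, u1 J a ->
        (red_pos star Apos J mu a <-> op_pos_on ip (eigsp pi J mu) (pi a))].
Proof.
split; first exact: part1.
split.
- by move=> a psi; apply: E_pi.
- exact: red_eq_iff.
- split.
  + by move=> *; apply: piZD.
  + by move=> *; apply: piM.
  + by move=> *; apply: pi1.
  + by move=> *; apply: pi_adj.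
- exact: red_pos_iff.
Qed.

End Main.

Unset Implicit Arguments.

Theorem proposition3p1
  (R : realType) (A : algType R[i]) (star : A -> A) (Apos : A -> Prop) (J : A)
  (D : lmodType R[i]) (ip : D -> D -> R[i]) (pi : A -> D -> D) (mu : R) :
  is_star_involution star ->
  is_quadratic_module star Apos ->
  (forall a, qm_support Apos a <-> a = 0) ->
  herm star J ->
  is_inner_product ip ->
  is_star_rep ip star pi ->
  rep_injective pi ->
  (forall a, Apos a <-> op_pos_on ip (fun _ => True) (pi a)) ->
  (* D = E_mu ⊕ E_mu^⊥ *)
  (forall psi, exists psi0 phi,
      [/\ eigsp pi J mu psi0, orth_compl ip (eigsp pi J mu) phi & psi = psi0 + phi]) ->
  (exists eps : R, 0 < eps /\
     forall phi, orth_compl ip (eigsp pi J mu) phi ->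
       rC eps * ip phi phi <= ip phi (pi ((J - rsc A mu) ^+ 2) phi)) ->
  (* (A^{u1})^+_H + (<J - mu>)_H = R_mu = {a ∈ (A^{u1})_H : <psi, pi(a) psi> >= 0 on E_mu} *)
  (forall a,
     ((exists p q, [/\ u1 J p /\ Apos p,
                       gen_star_ideal_u1 star J (J - rsc A mu) q /\ herm star q
                     & a = p + q])
        <-> Rmu star Apos J mu a) /\
     (Rmu star Apos J mu a <->
        [/\ u1 J a, herm star a &
            forall psi, eigsp pi J mu psi -> 0 <= ip psi (pi a psi)])) /\
  (* pi_{mu-red}([a]_mu) := pi(a) restricted to E_mu is an injective *-representation
     of A_{mu-red} on E_mu with (A_{mu-red})^+_H = pi_{mu-red}^{-1}(L^*(E_mu)^+_H) *)
  [/\ (* pi(a) maps E_mu into E_mu, so pi_{mu-red}([a]_mu) ∈ L(E_mu) *)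
      forall a psi, u1 J a -> eigsp pi J mu psi -> eigsp pi J mu (pi a psi),
      (* well defined on classes and injective *)
      forall a b, u1 J a -> u1 J b ->
        (red_eq star Apos J mu a b <->
           forall psi, eigsp pi J mu psi -> pi a psi = pi b psi),
      (* *-representation properties on E_mu *)
      [/\ forall (z : R[i]) a b psi, u1 J a -> u1 J b -> eigsp pi J mu psi ->
            pi (z *: a + b) psi = z *: pi a psi + pi b psi,
          forall a b psi, u1 J a -> u1 J b -> eigsp pi J mu psi ->
            pi (a * b) psi = pi a (pi b psi),
          forall psi, eigsp pi J mu psi -> pi 1 psi = psi &
          forall a psi phi, u1 J a -> eigsp pi J mu psi -> eigsp pi J mu phi ->
            ip psi (pi a phi) = ip (pi (star a) psi) phi] &
      (* positive cone *)
      forall a, u1 J a ->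
        (red_pos star Apos J mu a <-> op_pos_on ip (eigsp pi J mu) (pi a))].
Proof.
move=> Hstar Hqm _ HJ Hip Hpi _ Hpos Hdec [eps [he Heps]].
exact: (@main R A star Apos J D ip pi mu Hstar Hqm HJ Hip Hpi Hpos Hdec eps he Heps).
Qed.
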